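(* For any positive integer $g$, the number of numerical semigroups $\Lambda$ with genus $g$ satisfying $f(\Lambda) < 2 m(\Lambda)$ is $F_{g+1}$.
   Context: A numerical semigroup is a subset $\Lambda\subseteq\mathbb{N}_0$ closed under addition, containing $0$, with finite complement in $\mathbb{N}_0$. Its genus is $|\mathbb{N}_0\setminus\Lambda|$, its multiplicity $m(\Lambda)$ is its smallest nonzero element, and its Frobenius number $f(\Lambda)$ is the largest element of $\mathbb{N}_0\setminus\Lambda$. $F_n$ are the Fibonacci numbers: $F_1=F_2=1$, $F_{n+2}=F_{n+1}+F_n$. *)

(* Defs.v *)
From mathcomp Require Import all_boot.
From mathcomp Require Import boolp classical_sets cardinality.
Set Implicit Arguments. Unset Strict Implicit. Unset Printing Implicit Defensive.
Local Open Scope classical_set_scope.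
Local Open Scope card_scope.

Fixpoint fib (n : nat) : nat :=
  match n with
  | 0 => 0
  | 1 => 1
  | (m.+1 as n').+1 => fib n' + fib m
  end.

Definition numerical_semigroup (L : set nat) : Prop :=
  L 0 /\ (forall x y, L x -> L y -> L (x + y)) /\ finite_set (~` L).

Definition has_genus (L : set nat) (g : nat) : Prop := (~` L) #= `I_g.

Definition is_multiplicity (L : set nat) (m : nat) : Prop :=
  (0 < m)%N /\ L m /\ (forall k, (0 < k)%N -> (k < m)%N -> ~ L k).

Definition is_frobenius (L : set nat) (f : nat) : Prop :=
  ~ L f /\ (forall k, (f < k)%N -> L k).

(* Main.v *)
Require Import Defs.
From mathcomp Require Import all_boot.
From mathcomp Require Import boolp classical_sets cardinality.
From mathcomp Require Import zify.
Local Open Scope classical_set_scope.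
Local Open Scope card_scope.

Definition Lb (s : seq bool) (n : nat) : bool :=
  [|| n == 0, n == (size s).+1,
      ((size s).+1 < n < 2 * (size s).+1) && nth false s (n - (size s).+2)
    | 2 * (size s).+1 <= n]%N.

Definition weight (s : seq bool) : nat := (size s + count negb s)%N.

Fixpoint comps (n : nat) : seq (seq bool) :=
  match n with
  | 0 => [:: [::]]
  | 1 => [:: [:: true]]
  | (k.+1 as n').+1 => map (cons true) (comps n') ++ map (cons false) (comps k)
  end.

Lemma weight_nil : weight [::] = 0%N. Proof. by []. Qed.
Lemma weight_cons b t : weight (b :: t) = (weight t + (if b then 1 else 2))%N.
Proof. rewrite /weight /=; case: b => /=; lia. Qed.

Lemma weight0 t : weight t = 0%N -> t = [::].
Proof. by case: t => // b t; rewrite weight_cons; case: b; lia. Qed.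

Lemma cons_inj (b : bool) : injective (cons b).
Proof. by move=> x y [->]. Qed.

Lemma mem_comps s : forall n, (s \in comps n) = (weight s == n).
Proof.
elim: s => [|b t IH] [|[|k]] //=.
- by rewrite mem_cat; apply/negP => /orP[] /mapP[? _].
- rewrite inE weight_cons; case: b => /=.
    apply/eqP/eqP => [[->]//|]. move=> h; have /weight0 -> : weight t = 0%N by lia. by [].
  by apply/eqP/eqP => // ?; lia.
- rewrite -/(comps k.+1) weight_cons mem_cat; case: b.
    rewrite (mem_map (cons_inj true)) IH.
    rewrite (_ : (true :: t \in [seq false :: x | x <- comps k]) = false) ?orbF.
      by apply/eqP/eqP; lia.
    by apply/negP => /mapP[? _].
  rewrite (mem_map (cons_inj false)) IH.
  rewrite (_ : (false :: t \in [seq true :: x | x <- comps k.+1]) = false) ?orFb.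
    by apply/eqP/eqP; lia.
  by apply/negP => /mapP[? _].
Qed.

Lemma uniq_comps n : uniq (comps n) /\ uniq (comps n.+1).
Proof.
elim: n => [|n [IH1 IH2]] //; split => //=.
rewrite cat_uniq !(map_inj_uniq (cons_inj _)) IH1 IH2 /= andbT.
by apply/hasPn => x /mapP[y _ ->]; apply/negP => /mapP[? _].
Qed.

Lemma size_comps n : size (comps n) = fib n.+1 /\ size (comps n.+1) = fib n.+2.
Proof.
elim: n => [|n [IH1 IH2]] //; split => //=.
by rewrite size_cat !size_map IH1 IH2.
Qed.

Lemma Lb0 s : Lb s 0. Proof. by []. Qed.
Lemma Lbm s : Lb s (size s).+1. Proof. by rewrite /Lb eqxx orbT. Qed.
Lemma Lb_high s n : (2 * (size s).+1 <= n)%N -> Lb s n.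
Proof. by move=> h; rewrite /Lb h !orbT. Qed.
Lemma Lb_low s n : (0 < n)%N -> (n <= size s)%N -> Lb s n = false.
Proof.
move=> h1 h2; rewrite /Lb.
have -> : (n == 0) = false by lia.
have -> : (n == (size s).+1) = false by lia.
have -> : ((size s).+1 < n)%N = false by lia.
have -> : (2 * (size s).+1 <= n)%N = false by lia.
by [].
Qed.
Lemma Lb_mid s i : (i < size s)%N -> Lb s ((size s).+2 + i) = nth false s i.
Proof.
move=> h; rewrite /Lb.
have -> : ((size s).+2 + i == 0) = false by lia.
have -> : ((size s).+2 + i == (size s).+1) = false by lia.
have -> : ((size s).+1 < (size s).+2 + i < 2 * (size s).+1)%N = true by lia.
have -> : (2 * (size s).+1 <= (size s).+2 + i)%N = false by lia.
rewrite /= orbF (_ : (size s).+2 + i - (size s).+2 = i) //; lia.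
Qed.
Lemma Lb_pos s n : Lb s n -> n != 0 -> (size s < n)%N.
Proof.
move=> h nz; case: (leqP n (size s)) => // hn.
by rewrite Lb_low in h; lia.
Qed.
Lemma Lb_add s x y : Lb s x -> Lb s y -> Lb s (x + y).
Proof.
case: (eqVneq x 0) => [->//|xn]; case: (eqVneq y 0) => [-> ?|yn]; first by rewrite addn0.
move=> /Lb_pos/(_ xn) hx /Lb_pos/(_ yn) hy; apply: Lb_high; lia.
Qed.
Lemma Lb_lt2m s n : ~~ Lb s n -> (n < 2 * (size s).+1)%N.
Proof. by case: leqP => // h; rewrite Lb_high. Qed.
Lemma Lb_n0 s n : ~~ Lb s n -> n != 0.
Proof. by case: eqP => // ->. Qed.

Definition gaps s := [seq n <- iota 1 (2 * (size s).+1) | ~~ Lb s n].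

Lemma mem_gaps s n : (n \in gaps s) = ~~ Lb s n.
Proof.
rewrite mem_filter mem_iota; case h: (Lb s n) => //=.
have := Lb_lt2m _ _ (negbT h); have := Lb_n0 _ _ (negbT h); lia.
Qed.

Lemma uniq_gaps s : uniq (gaps s).
Proof. exact/filter_uniq/iota_uniq. Qed.

Lemma size_gaps s : size (gaps s) = weight s.
Proof.
rewrite size_filter (_ : 2 * (size s).+1 = size s + 1 + size s + 1)%N; last by lia.
rewrite !iotaD !count_cat.
rewrite (@eq_in_count _ _ predT (iota 1 (size s))); last first.
  by move=> x; rewrite mem_iota => hx; rewrite /= Lb_low //; lia.
rewrite count_predT size_iota /= add1n Lbm /=.
rewrite Lb_high /=; last by lia.
rewrite (_ : (1 + (size s + 1) = (size s).+2 + 0)%N); last by lia.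
rewrite iotaDl count_map.
rewrite (@eq_in_count _ _ (negb \o nth false s)); last first.
  by move=> x; rewrite mem_iota => hx /=; rewrite Lb_mid //; lia.
rewrite -count_map -/(mkseq (nth false s) (size s)) mkseq_nth /weight; lia.
Qed.

Lemma card_seq (t : seq nat) : uniq t -> [set n | n \in t] #= `I_(size t).
Proof.
move=> u; apply/card_esym/card_set_bijP; exists (nth 0 t); split.
- by move=> k /= hk; exact: mem_nth.
- by move=> i j; rewrite !in_setE /= => hi hj /eqP; rewrite nth_uniq // => /eqP.
- move=> x /= hx; exists (index x t); [by rewrite /= index_mem | exact: nth_index].
Qed.

Lemma genus_Lb s : ~` [set n | Lb s n] #= `I_(weight s).
Proof.
rewrite -size_gaps (_ : ~` _ = [set n | n \in gaps s]); first exact/card_seq/uniq_gaps.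
by apply/seteqP; split => n /=; rewrite mem_gaps => /negP.
Qed.

Lemma Lb_good s : (0 < weight s)%N ->
  numerical_semigroup [set n | Lb s n] /\ has_genus [set n | Lb s n] (weight s) /\
  exists m f, is_multiplicity [set n | Lb s n] m /\ is_frobenius [set n | Lb s n] f /\ (f < 2 * m)%N.
Proof.
move=> wpos.
have sp : (0 < size s)%N.
  move: wpos; rewrite /weight; have := count_size negb s; lia.
split; [|split; [exact: genus_Lb|]].
  split; [exact: Lb0|split; [move=> x y; exact: Lb_add|]].
  by exists (weight s); exact: genus_Lb.
exists (size s).+1.
have exP : exists n, ~~ Lb s n by exists 1; rewrite Lb_low.
have ubP : forall n, ~~ Lb s n -> (n <= 2 * (size s).+1)%N.
  by move=> n /Lb_lt2m; lia.
case: (ex_maxnP exP ubP) => f Pf maxf.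
exists f; split; [|split].
- split => //; split; first exact: Lbm.
  by move=> k k0 km /=; rewrite Lb_low.
- split; first by move/negP: Pf.
  by move=> k fk /=; apply/negPn/negP => nk; have := maxf k nk; lia.
- exact: Lb_lt2m.
Qed.

Lemma code_of L g m f : numerical_semigroup L -> has_genus L g ->
  is_multiplicity L m -> is_frobenius L f -> (f < 2 * m)%N ->
  exists s, L = [set n | Lb s n] /\ weight s = g.
Proof.
move=> [L0 [Ladd Lfin]] hg [m0 [Lm hmin]] [nLf hf] f2m.
pose s := mkseq (fun i => `[< L (m.+1 + i) >]) m.-1.
have hm : (size s).+1 = m by rewrite size_mkseq; lia.
have key : forall n, L n <-> Lb s n.
  move=> n; case: (posnP n) => [->|npos].
    by split=> _; [exact: Lb0 | exact: L0].
  case: (ltngtP n m) => [nlt|ngt|->].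
  - split => [Ln|]; first by exfalso; exact: (hmin n npos nlt Ln).
    by rewrite Lb_low //; lia.
  - case: (ltnP n (2 * m)) => [n2|n2].
      have E : Lb s n = `[< L n >].
        have hi : (n - m.+1 < size s)%N by lia.
        rewrite [in LHS](_ : n = (size s).+2 + (n - m.+1))%N; last by lia.
        rewrite Lb_mid // /s nth_mkseq; last by lia.
        by rewrite (_ : (m.+1 + (n - m.+1) = n)%N) //; lia.
      by rewrite E; split => [?|/asboolP //]; exact/asboolP.
    split => _; [apply: Lb_high; lia | apply: hf; lia].
  - by split => _ //; rewrite -{1}hm; exact: Lbm.
have eqL : L = [set n | Lb s n] by apply/seteqP; split => n /= /key.
exists s; split => //.
have h2 : ~` L #= `I_(weight s) by rewrite eqL; exact: genus_Lb.
apply/card_eq_II; exact: card_eq_trans (card_esym h2) hg.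
Qed.

Lemma Lb_inj s t : [set n | Lb s n] = [set n | Lb t n] -> s = t.
Proof.
move=> eq.
have E : forall n, Lb s n = Lb t n.
  move=> n; move/seteqP: eq => [h1 h2]; apply/idP/idP => h; [exact: h1 | exact: h2].
have hst : size s = size t.
  case: (ltngtP (size s) (size t)) => // h.
    by have := E (size s).+1; rewrite Lbm Lb_low.
  by have := E (size t).+1; rewrite Lbm Lb_low.
apply: (eq_from_nth (x0 := false) hst) => i hi.
by rewrite -Lb_mid // E hst Lb_mid // -hst.
Qed.

Theorem proposition2p3 (g : nat) : (0 < g)%N ->
  [set L : set nat | numerical_semigroup L /\ has_genus L g /\
     exists m f, is_multiplicity L m /\ is_frobenius L f /\ (f < 2 * m)%N]
  #= `I_(fib g.+1).
Proof.
move=> gpos; apply/card_esym/card_set_bijP.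
exists (fun k => [set n | Lb (nth [::] (comps g) k) n]); split.
- move=> k /= hk.
  have : nth [::] (comps g) k \in comps g by apply: mem_nth; rewrite (size_comps g).1.
  rewrite mem_comps => /eqP w.
  by have := Lb_good (nth [::] (comps g) k); rewrite w; apply.
- move=> i j; rewrite !in_setE /= => hi hj /Lb_inj /eqP.
  by rewrite nth_uniq ?(size_comps g).1 ?(uniq_comps g).1 // => /eqP.
- move=> L /= [ns [hg [m [f [hm [hf hfm]]]]]].
  case: (code_of _ _ _ _ ns hg hm hf hfm) => s [-> ws].
  have sin : s \in comps g by rewrite mem_comps ws.
  exists (index s (comps g)); last by rewrite nth_index.
  by rewrite -/(fib g.+1) -(size_comps g).1 index_mem.
Qed.
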